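(* Let $n\ge1$ and let $\wp\in \mathrm{C}^{0,n+1}$ be a primitive idempotent, $E:=\mathrm{C}^{0,n+1}\wp$. Then $P_n:=\ker(\Phi: A_n\otimes_\mathbb{R} E\to A_n\otimes_\mathbb{R} E)$ is a finitely generated projective $A_n$-module and the restriction of the symmetric bilinear form $\hat\beta$ to $P_n$ is non-degenerate.
   Context: $A_n:=\mathbb{R}[x_0,\dots,x_n]/(\sum_i x_i^2-1)$. $\mathrm{C}^{0,n+1}$ is the real Clifford algebra generated by $e_0,\dots,e_n$ with $e_i^2=1$ and $e_ie_j=-e_je_i$ for $i\ne j$. $\Phi$ is the $A_n$-linear map $\Phi(a\otimes u)=\tfrac12\big(\sum_{i=0}^n x_ia\otimes e_iu + a\otimes u\big)$, i.e. left multiplication by $\tfrac12(\mathbf{x}+1)$ with $\mathbf{x}=\sum_i x_i\otimes e_i$ (it preserves $A_n\otimes E$). $\sigma$ is the canonical (reversing) involution of $\mathrm{C}^{0,n+1}$ ($\sigma(e_i)=e_i$, $\sigma(xy)=\sigma(y)\sigma(x)$), $\beta(x,y)=\operatorname{Tr}(\sigma(x)y)$ is the trace form on $\mathrm{C}^{0,n+1}$ (Tr the trace of left multiplication), and $\hat\beta(a\otimes x,b\otimes y):=ab\,\beta(x,y)$ on $A_n\otimes_\mathbb{R} E$. *)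

(* Defs.v *)
From HB Require Import structures.
From mathcomp Require Import all_boot all_order all_algebra.
From mathcomp Require Import ring_quotient generic_quotient.
From mathcomp Require Import mpoly.
From mathcomp Require Import reals.
From Stdlib Require Import ClassicalEpsilon.

Set Implicit Arguments.
Unset Strict Implicit.
Unset Printing Implicit Defensive.

Import GRing.Theory.
Local Open Scope ring_scope.
Local Open Scope quotient_scope.

Section Sphere.
Variables (R : realType) (n : nat).

Definition sph_poly : {mpoly R[n.+1]} := \sum_(i < n.+1) 'X_i ^+ 2 - 1.

Definition sph_ideal : {pred {mpoly R[n.+1]}} := fun p =>
  if excluded_middle_informative (exists q, p = q * sph_poly) then true else false.

Lemma sph_idealP p : reflect (exists q, p = q * sph_poly) (p \in sph_ideal).
Proof.
rewrite unfold_in /sph_ideal.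
by case: excluded_middle_informative => h; constructor.
Qed.

Lemma sph_ideal_closed : idealr_closed sph_ideal.
Proof.
split.
- by apply/sph_idealP; exists 0; rewrite mul0r.
- apply/negP => /sph_idealP [q hq].
  pose v : 'I_n.+1 -> R := fun i => if i == ord0 then 1 else 0.
  have := congr1 (meval v) hq.
  rewrite meval1 mevalM /sph_poly mevalB meval1 raddf_sum.
  rewrite (bigD1 ord0) //= big1; last first.
    by move=> i /negPf hi; rewrite expr2 mevalM mevalXU /v hi mul0r.
  rewrite expr2 mevalM mevalXU /v eqxx mulr1 addr0 subrr mulr0.
  by move/eqP; rewrite oner_eq0.
- move=> a u v /sph_idealP [q1 ->] /sph_idealP [q2 ->].
  by apply/sph_idealP; exists (a * q1 + q2); rewrite mulrDl mulrA.
Qed.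

HB.instance Definition _ := isIdealr.Build {mpoly R[n.+1]} sph_ideal
  sph_ideal_closed.

Definition An : comNzRingType := {ideal_quot sph_ideal}.

Definition xA (i : 'I_n.+1) : An := \pi_An ('X_i).

Definition cA (c : R) : An := \pi_An (c%:MP).

End Sphere.

(* The Clifford algebra C^{0,m} (generators e_0..e_{m-1}, e_i^2 = 1,        *)
(* e_i e_j = - e_j e_i), with coefficients in a commutative ring K,         *)
(* written in the standard basis e_S = e_{s_1} ... e_{s_k} (s_1<...<s_k),   *)
(* S ranging over subsets of {0,...,m-1}.  With K = R this is C^{0,m};      *)
(* with K = A_n it is A_n (x)_R C^{0,m} in coordinates.                      *)

Section Clifford.
Variables (K : comNzRingType) (m : nat).

Local Notation cl := {ffun {set 'I_m} -> K^o}.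

(* e_S e_T = csign S T e_{S (+) T} *)
Definition csign (S T : {set 'I_m}) : K :=
  (-1) ^+ #|[set p : 'I_m * 'I_m | [&& p.1 \in S, p.2 \in T & (p.2 < p.1)%N]]|.

Definition symdiff (S T : {set 'I_m}) : {set 'I_m} := (S :\: T) :|: (T :\: S).

Definition clmul (u v : cl) : cl := [ffun U =>
  \sum_(S : {set 'I_m}) \sum_(T : {set 'I_m})
     (if symdiff S T == U then csign S T * u S * v T else 0)].

Definition cbasis (S : {set 'I_m}) : cl := [ffun U => if U == S then 1 else 0].

Definition cl1 : cl := cbasis set0.

Definition cgen (i : 'I_m) : cl := cbasis [set i].

(* the canonical (reversing) involution: sigma(e_S) = (-1)^(k(k-1)/2) e_S *)
Definition crev (u : cl) : cl := [ffun S : {set 'I_m} => (-1) ^+ 'C(#|S|, 2) * u S].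

(* trace of left multiplication by u on the free K-module cl *)
Definition ctr (u : cl) : K := \sum_(S : {set 'I_m}) clmul u (cbasis S) S.

Definition cbeta (u v : cl) : K := ctr (clmul (crev u) v).

Definition primitive_idempotent (p : cl) : Prop :=
  [/\ clmul p p = p, p <> 0 &
      forall a b : cl, clmul a a = a -> clmul b b = b ->
        clmul a b = 0 -> clmul b a = 0 -> p = a + b -> a = 0 \/ b = 0].

End Clifford.

Notation cl K m := {ffun {set 'I_m} -> K^o}.

Definition submodule (A : comNzRingType) (V : lmodType A) (P : V -> Prop) :=
  P 0 /\ forall (a : A) u v, P u -> P v -> P (a *: u + v).

Definition linear_on (A : comNzRingType) (V W : lmodType A) (P : V -> Prop)
  (f : V -> W) := forall (a : A) u v, P u -> P v -> f (a *: u + v) = a *: f u + f v.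

(* P is a finitely generated projective A-module: a retract (direct summand,
   up to isomorphism) of a free module A^k of finite rank *)
Definition fg_projective (A : comNzRingType) (V : lmodType A) (P : V -> Prop) :=
  submodule P /\
  exists (k : nat) (f : 'rV[A]_k -> V) (g : V -> 'rV[A]_k),
    [/\ linear_on (fun _ => True) f, linear_on P g,
        forall w, P (f w) & forall u, P u -> f (g u) = u].

(* a bilinear form b restricted to P is non-degenerate: the adjoint map
   P -> Hom_A(P, A), u |-> b(u, -) is bijective *)
Definition nondegenerate_on (A : comNzRingType) (V : lmodType A) (P : V -> Prop)
  (b : V -> V -> A) :=
  (forall u, P u -> (forall v, P v -> b u v = 0) -> u = 0) /\
  (forall phi : V -> A^o, linear_on P phi ->
     exists2 u, P u & forall v, P v -> b u v = phi v).

(* Main.v *)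
Require Import Defs.
From HB Require Import structures.
From mathcomp Require Import all_boot all_order all_algebra.
From mathcomp Require Import ring_quotient generic_quotient.
From mathcomp Require Import mpoly.
From mathcomp Require Import reals.
From mathcomp Require Import zify ring lra.

Module M_Cl1.
Import GRing.Theory.
Local Open Scope ring_scope.

Set Implicit Arguments.
Unset Strict Implicit.
Unset Printing Implicit Defensive.

Section Sd.
Variable m : nat.
Implicit Types S T U : {set 'I_m}.

Lemma in_symdiff S T x : (x \in symdiff S T) = (x \in S) (+) (x \in T).
Proof. by rewrite /symdiff !inE; case: (x \in S); case: (x \in T). Qed.

Lemma symdiffA : associative (@symdiff m).
Proof. by move=> S T U; apply/setP => x; rewrite !in_symdiff addbA. Qed.
Lemma symdiffC : commutative (@symdiff m).
Proof. by move=> S T; apply/setP => x; rewrite !in_symdiff addbC. Qed.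
Lemma symdiffvv S : symdiff S S = set0.
Proof. by apply/setP => x; rewrite in_symdiff inE addbb. Qed.
Lemma symdiff0s S : symdiff set0 S = S.
Proof. by apply/setP => x; rewrite in_symdiff inE. Qed.
Lemma symdiffs0 S : symdiff S set0 = S.
Proof. by rewrite symdiffC symdiff0s. Qed.
Lemma symdiffK S T : symdiff S (symdiff S T) = T.
Proof. by rewrite symdiffA symdiffvv symdiff0s. Qed.
Lemma symdiffKr S T : symdiff (symdiff T S) S = T.
Proof. by rewrite -symdiffA symdiffvv symdiffs0. Qed.
Lemma symdiff_inj S : injective (symdiff S).
Proof. by move=> T U h; rewrite -(symdiffK S T) h symdiffK. Qed.
Lemma symdiff_eq S T U : (symdiff S T == U) = (T == symdiff S U).
Proof.
apply/eqP/eqP => [<-|->]; by rewrite symdiffK.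
Qed.
End Sd.

Lemma sign_symdiff (K : pzRingType) (X : finType) (A B : {set X}) :
  (-1) ^+ #|(A :\: B) :|: (B :\: A)| = (-1) ^+ #|A| * (-1) ^+ #|B| :> K.
Proof.
have h : (#|(A :\: B) :|: (B :\: A)| + (#|A :&: B|).*2 = #|A| + #|B|)%N.
  rewrite cardsU.
  have -> : (A :\: B) :&: (B :\: A) = set0.
    by apply/setP=> x; rewrite !inE; case: (x \in A); case: (x \in B).
  rewrite cards0 subn0 -addnn.
  have := cardsID B A; have := cardsID A B.
  rewrite (setIC B A). lia.
by rewrite -exprD -h exprD -mul2n mulnC exprM sqrr_sign mulr1.
Qed.

End M_Cl1.
Import M_Cl1.

Module M_Cl2.
Import GRing.Theory.
Local Open Scope ring_scope.

Set Implicit Arguments.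
Unset Strict Implicit.
Unset Printing Implicit Defensive.

Section Cliff.
Variables (K : comNzRingType) (m : nat).
Implicit Types S T U V : {set 'I_m}.
Local Notation cl := (cl K m).
Implicit Types u v w a : cl.
Local Notation cs := (@csign K m).
Local Notation sd := (@symdiff m).

Lemma csign_sdl S T U : cs (sd S T) U = cs S U * cs T U.
Proof.
rewrite /csign -sign_symdiff; congr (_ ^+ _); apply: eq_card => p.
rewrite !inE.
by case: (p.1 \in S); case: (p.1 \in T); case: (p.2 \in U); case: (p.2 < p.1)%N.
Qed.

Lemma csign_sdr S T U : cs S (sd T U) = cs S T * cs S U.
Proof.
rewrite /csign -sign_symdiff; congr (_ ^+ _); apply: eq_card => p.
rewrite !inE.
by case: (p.1 \in S); case: (p.2 \in T); case: (p.2 \in U); case: (p.2 < p.1)%N.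
Qed.

Lemma csign0l T : cs set0 T = 1.
Proof.
rewrite /csign; set X := [set _ | _].
suff -> : X = set0 by rewrite cards0.
by apply/setP => p; rewrite !inE.
Qed.

Lemma csign0r T : cs T set0 = 1.
Proof.
rewrite /csign; set X := [set _ | _].
suff -> : X = set0 by rewrite cards0.
by apply/setP => p; rewrite !inE andbF.
Qed.

Lemma card_lt_pairs S :
  #|[set p : 'I_m * 'I_m | [&& p.1 \in S, p.2 \in S & (p.2 < p.1)%N]]| = 'C(#|S|, 2).
Proof.
set X := [set _ | _].
set Y := [set p : 'I_m * 'I_m | [&& p.1 \in S, p.2 \in S & (p.1 < p.2)%N]].
set D := [set p : 'I_m * 'I_m | [&& p.1 \in S, p.2 \in S & (p.1 == p.2)]].
have hY : #|Y| = #|X|.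
  have -> : Y = [set (p.2, p.1) | p in X].
    apply/setP => [[a b]]; rewrite !inE /=; apply/idP/imsetP => [/and3P[ha hb hab]|].
      by exists (b, a) => //; rewrite !inE /= ha hb hab.
    by move=> [[c d]]; rewrite !inE /= => /and3P[hc hd hcd] [-> ->]; rewrite hc hd hcd.
  by rewrite card_imset // => [[a b] [c d]] /= [-> ->].
have hD : #|D| = #|S|.
  have -> : D = [set (i, i) | i in S].
    apply/setP => [[a b]]; rewrite !inE /=; apply/idP/imsetP => [/and3P[ha hb /eqP hab]|].
      by exists a => //; rewrite hab.
    by move=> [c hc [-> ->]]; rewrite hc eqxx.
  by rewrite card_imset // => i j [].
have hS : #|setX S S| = (#|X| + #|Y| + #|D|)%N.
  have e1 : X :&: Y = set0.
    by apply/setP => p; rewrite !inE; case: ltngtP; rewrite !andbF.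
  have e2 : (X :|: Y) :&: D = set0.
    apply/setP => p; rewrite !inE -val_eqE /=.
    by case: ltngtP; rewrite ?andbF.
  have e3 : setX S S = X :|: Y :|: D.
    apply/setP => p; rewrite !inE -val_eqE /=.
    by case: (p.1 \in S); case: (p.2 \in S); case: ltngtP.
  have := cardsUI (X :|: Y) D; have := cardsUI X Y.
  by rewrite e1 e2 e3 !cards0 !addn0 => -> ->.
move: hS; rewrite cardsX hY hD bin2 => hS.
have e : (#|S| * #|S|.-1 = #|X|.*2)%N.
  case: #|S| hS => [|k] /=; lia.
by rewrite e doubleK.
Qed.

Lemma csign_self S : cs S S = (-1) ^+ 'C(#|S|, 2).
Proof. by rewrite /csign card_lt_pairs. Qed.

Lemma csign_selfK S : cs S S * (-1) ^+ 'C(#|S|, 2) = 1.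
Proof. by rewrite csign_self -expr2 sqrr_sign. Qed.

Lemma clmulE u v U :
  clmul u v U = \sum_S cs S (sd S U) * u S * v (sd S U).
Proof.
rewrite ffunE; apply: eq_bigr => S _.
rewrite (bigD1 (sd S U)) //= symdiffK eqxx big1 ?addr0 // => T hT.
by rewrite symdiff_eq (negPf hT).
Qed.

End Cliff.

End M_Cl2.
Import M_Cl2.

Module M_Cl3.
Import GRing.Theory.
Local Open Scope ring_scope.

Set Implicit Arguments.
Unset Strict Implicit.
Unset Printing Implicit Defensive.

Section Cliff.
Variables (K : comNzRingType) (m : nat).
Implicit Types S T U V : {set 'I_m}.
Local Notation cl := (cl K m).
Implicit Types u v w a : cl.
Local Notation cs := (@csign K m).
Local Notation sd := (@symdiff m).

Lemma clD u v S : (u + v) S = u S + v S. Proof. by rewrite ffunE. Qed.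
Lemma clZ (k : K) u S : (k *: u) S = k * u S. Proof. by rewrite ffunE. Qed.
Lemma clN u S : (- u) S = - u S. Proof. by rewrite ffunE. Qed.
Lemma cl0 S : (0 : cl) S = 0. Proof. by rewrite ffunE. Qed.

Lemma clmulDl w u v : clmul (u + v) w = clmul u w + clmul v w.
Proof.
apply/ffunP => U; rewrite clD !clmulE -big_split /=.
by apply: eq_bigr => S _; rewrite clD; ring.
Qed.
Lemma clmulDr w u v : clmul w (u + v) = clmul w u + clmul w v.
Proof.
apply/ffunP => U; rewrite clD !clmulE -big_split /=.
by apply: eq_bigr => S _; rewrite clD; ring.
Qed.
Lemma clmulZl (k : K) u v : clmul (k *: u) v = k *: clmul u v.
Proof.
apply/ffunP => U; rewrite clZ !clmulE mulr_sumr.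
by apply: eq_bigr => S _; rewrite clZ; ring.
Qed.
Lemma clmulZr (k : K) u v : clmul u (k *: v) = k *: clmul u v.
Proof.
apply/ffunP => U; rewrite clZ !clmulE mulr_sumr.
by apply: eq_bigr => S _; rewrite clZ; ring.
Qed.
Lemma clmul0l u : clmul 0 u = 0.
Proof.
apply/ffunP => U; rewrite clmulE cl0 big1 // => S _; rewrite cl0; ring.
Qed.
Lemma clmul0r u : clmul u 0 = 0.
Proof.
apply/ffunP => U; rewrite clmulE cl0 big1 // => S _; rewrite cl0; ring.
Qed.
Lemma clmulNl u v : clmul (- u) v = - clmul u v.
Proof. by rewrite -scaleN1r clmulZl scaleN1r. Qed.
Lemma clmulNr u v : clmul u (- v) = - clmul u v.
Proof. by rewrite -scaleN1r clmulZr scaleN1r. Qed.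
Lemma clmulBl w u v : clmul (u - v) w = clmul u w - clmul v w.
Proof. by rewrite clmulDl clmulNl. Qed.
Lemma clmulBr w u v : clmul w (u - v) = clmul w u - clmul w v.
Proof. by rewrite clmulDr clmulNr. Qed.

Lemma clmul_suml (I : Type) (r : seq I) (P : pred I) (F : I -> cl) w :
  clmul (\sum_(i <- r | P i) F i) w = \sum_(i <- r | P i) clmul (F i) w.
Proof. exact: (big_morph (fun x => clmul x w) (clmulDl w) (clmul0l w)). Qed.
Lemma clmul_sumr (I : Type) (r : seq I) (P : pred I) (F : I -> cl) w :
  clmul w (\sum_(i <- r | P i) F i) = \sum_(i <- r | P i) clmul w (F i).
Proof. exact: (big_morph (fun x => clmul w x) (clmulDr w) (clmul0r w)). Qed.

Lemma clmulA u v w : clmul (clmul u v) w = clmul u (clmul v w).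
Proof.
apply/ffunP => U; rewrite !clmulE.
under eq_bigr => V _ do rewrite clmulE mulr_sumr mulr_suml.
rewrite exchange_big /=; apply: eq_bigr => S _.
rewrite (reindex_inj (@symdiff_inj m S)) /=.
rewrite clmulE mulr_sumr; apply: eq_bigr => T _.
rewrite symdiffK.
set X := sd (sd S T) U.
have eX : sd T (sd S U) = X by rewrite /X symdiffA (symdiffC T S).
have eSU : sd S U = sd T X by rewrite -eX symdiffK.
have eS : cs S (sd S U) = cs S T * cs S X by rewrite eSU csign_sdr.
rewrite eX eS /X csign_sdl. ring.
Qed.

Lemma clmul_basis S T : clmul (cbasis K S) (cbasis K T) = cs S T *: cbasis K (sd S T).
Proof.
apply/ffunP => U; rewrite clmulE !ffunE (bigD1 S) //= big1 ?addr0.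
  rewrite !ffunE eqxx mulr1 symdiff_eq.
  by case: eqP => [->|_]; rewrite /GRing.scale /= ?mulr1 ?mulr0 ?symdiffK.
by move=> S' hS'; rewrite !ffunE (negPf hS') mulr0 mul0r.
Qed.

Lemma basis_expand u : u = \sum_S u S *: cbasis K S.
Proof.
apply/ffunP => U; rewrite sum_ffunE (bigD1 U) //= big1 ?addr0.
  by rewrite !ffunE eqxx /GRing.scale /= mulr1.
by move=> S hS; rewrite !ffunE eq_sym (negPf hS) /GRing.scale /= mulr0.
Qed.

Lemma clmul1l u : clmul (cl1 K m) u = u.
Proof.
apply/ffunP => U; rewrite clmulE (bigD1 set0) //= big1 ?addr0.
  by rewrite !ffunE eqxx symdiff0s csign0l !mul1r.
by move=> S hS; rewrite !ffunE (negPf hS) mulr0 mul0r.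
Qed.

Lemma clmul1r u : clmul u (cl1 K m) = u.
Proof.
apply/ffunP => U; rewrite clmulE (bigD1 U) //= big1 ?addr0.
  by rewrite !ffunE symdiffvv eqxx csign0r mulr1 mul1r.
move=> S hS; rewrite !ffunE.
case: eqP => [/eqP|_]; last by rewrite mulr0.
by rewrite symdiff_eq symdiffs0 eq_sym (negPf hS).
Qed.

Lemma crevD u v : crev (u + v) = crev u + crev v.
Proof. by apply/ffunP => S; rewrite !ffunE mulrDr. Qed.
Lemma crevZ (k : K) u : crev (k *: u) = k *: crev u.
Proof. by apply/ffunP => S; rewrite !ffunE /GRing.scale /= mulrCA. Qed.
Lemma crevK u : crev (crev u) = u.
Proof. by apply/ffunP => S; rewrite !ffunE mulrA -expr2 sqrr_sign mul1r. Qed.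
Lemma crev1 : crev (cl1 K m) = cl1 K m.
Proof.
apply/ffunP => S; rewrite !ffunE; case: eqP => [->|]; last by rewrite mulr0.
by rewrite cards0 bin0n expr0 mul1r.
Qed.
Lemma crev_gen (i : 'I_m) : crev (cgen K i) = cgen K i.
Proof.
apply/ffunP => S; rewrite !ffunE; case: eqP => [->|]; last by rewrite mulr0.
by rewrite cards1 bin_small // expr0 mul1r.
Qed.
Lemma crevB u v : crev (u - v) = crev u - crev v.
Proof. by rewrite crevD -scaleN1r crevZ scaleN1r. Qed.

Definition ip u v : K := \sum_S u S * v S.

Lemma ipC u v : ip u v = ip v u.
Proof. by apply: eq_bigr => S _; rewrite mulrC. Qed.

Lemma ip_basis u S : ip u (cbasis K S) = u S.
Proof.
rewrite /ip (bigD1 S) //= big1 ?addr0; first by rewrite ffunE eqxx mulr1.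
by move=> T hT; rewrite ffunE (negPf hT) mulr0.
Qed.

Lemma sign_self S : (-1) ^+ 'C(#|S|, 2) * cs S S = 1 :> K.
Proof. by rewrite mulrC csign_selfK. Qed.

Lemma ip_adjl a u v : ip (clmul a u) v = ip u (clmul (crev a) v).
Proof.
rewrite /ip.
under eq_bigr => U _ do rewrite clmulE mulr_suml.
under [RHS]eq_bigr => T _ do rewrite clmulE mulr_sumr.
rewrite exchange_big [RHS]exchange_big /=; apply: eq_bigr => S _.
rewrite (reindex_inj (@symdiff_inj m S)) /=; apply: eq_bigr => T _.
rewrite symdiffK ffunE csign_sdr.
transitivity (((-1) ^+ 'C(#|S|, 2) * cs S S) * (cs S T * a S * u T * v (sd S T)));
  first by rewrite sign_self mul1r.
ring.
Qed.

Lemma ip_adjr a u v : ip (clmul u a) v = ip u (clmul v (crev a)).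
Proof.
rewrite /ip.
under eq_bigr => U _ do rewrite clmulE mulr_suml.
rewrite exchange_big /=; apply: eq_bigr => T _.
rewrite clmulE mulr_sumr.
rewrite (reindex_inj (@symdiff_inj m T)) /=.
rewrite [RHS](reindex_inj (@symdiff_inj m T)) /=; apply: eq_bigr => S _.
rewrite symdiffK (symdiffC T S) symdiffKr ffunE csign_sdl.
transitivity (((-1) ^+ 'C(#|S|, 2) * cs S S) * (cs T S * u T * a S * v (sd S T)));
  first by rewrite sign_self mul1r.
ring.
Qed.

Lemma ctr_basis U : ctr (cbasis K U) = if U == set0 then #|{set 'I_m}|%:R else 0.
Proof.
rewrite /ctr; under eq_bigr => S _ do rewrite clmul_basis ffunE ffunE.
case: eqP => [->|/eqP hU].
  under eq_bigr => S _ do rewrite symdiff0s eqxx csign0l scale1r.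
  by rewrite sumr_const; congr (_%:R); apply: eq_card.
rewrite big1 // => S _.
have -> : (S == sd U S) = false.
  apply/negP => /eqP h; move: hU; rewrite -(symdiffKr S U) symdiffC -h.
  by rewrite symdiffvv eqxx.
by rewrite scaler0.
Qed.

Lemma ctrZ (k : K) u : ctr (k *: u) = k * ctr u.
Proof.
rewrite /ctr mulr_sumr; apply: eq_bigr => S _.
by rewrite clmulZl ffunE.
Qed.

Lemma cbeta_basis S T :
  cbeta (cbasis K S) (cbasis K T) = if S == T then #|{set 'I_m}|%:R else 0.
Proof.
rewrite /cbeta.
have -> : crev (cbasis K S) = (-1) ^+ 'C(#|S|, 2) *: cbasis K S.
  apply/ffunP => U; rewrite !ffunE /GRing.scale /=.
  by case: eqP => [->|]; rewrite ?mulr0 ?mulr1.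
rewrite clmulZl clmul_basis scalerA ctrZ ctr_basis.
have -> : (sd S T == set0) = (S == T).
  by rewrite symdiff_eq symdiffs0 eq_sym.
case: eqP => [->|]; last by rewrite mulr0.
by rewrite sign_self mul1r.
Qed.

Lemma cgen_anti (i j : 'I_m) :
  clmul (cgen K i) (cgen K j) + clmul (cgen K j) (cgen K i) =
  (if i == j then 2%:R else 0) *: cl1 K m.
Proof.
rewrite /cgen !clmul_basis /cl1.
case: eqP => [->|/eqP hij].
  have -> : cs [set j] [set j] = 1.
    rewrite /csign; set X := [set _ | _]; suff -> : X = set0 by rewrite cards0 expr0.
    apply/setP => p; rewrite !inE; case: p => a b /=.
    by apply/negP => /and3P[/eqP -> /eqP ->]; rewrite ltnn.
  by rewrite symdiffvv scale1r scaler_nat mulr2n.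
rewrite scale0r (symdiffC [set j]) -scalerDl.
suff -> : cs [set i] [set j] + cs [set j] [set i] = 0 by rewrite scale0r.
rewrite /csign.
have E : forall a b : 'I_m, [set p : 'I_m * 'I_m | [&& p.1 \in [set a], p.2 \in [set b] & (p.2 < p.1)%N]]
     = if (b < a)%N then [set (a, b)] else set0.
  move=> a b; apply/setP => [[c d]]; rewrite !inE /=.
  case: ifP => h; rewrite ?inE -?pair_eqE /=.
    by apply/idP/idP => [/and3P[-> -> //]|/andP[/eqP -> /eqP ->]]; rewrite !eqxx.
  by apply/negP => /and3P[/eqP -> /eqP ->]; rewrite h.
rewrite !E; case: (ltngtP i j) => h.
- by rewrite cards1 cards0 expr0 expr1 addrN.
- by rewrite cards1 cards0 expr0 expr1 addNr.
- by move: hij; rewrite -val_eqE /= h eqxx.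
Qed.

Lemma clmul_expand3 a y w c :
  clmul a (clmul (clmul c y) w) =
  \sum_S c S *: clmul a (clmul (clmul (cbasis K S) y) w).
Proof.
rewrite {1}(basis_expand c) clmul_suml clmul_suml clmul_sumr.
by apply: eq_bigr => S _; rewrite !(clmulZl, clmulZr).
Qed.

End Cliff.

End M_Cl3.
Import M_Cl3.

Module M_Gram.
Import GRing.Theory Num.Theory.
Local Open Scope ring_scope.

Set Implicit Arguments.
Unset Strict Implicit.
Unset Printing Implicit Defensive.

Lemma mx_sq_eq0 (F : realFieldType) p k (w : 'M[F]_(p, k)) : w *m w^T = 0 -> w = 0.
Proof.
move=> h; apply/matrixP => r j; rewrite mxE.
have h0 : \sum_(i < k) w r i * w r i = 0.
  have := congr1 (fun M : 'M_p => M r r) h; rewrite !mxE => e; rewrite -[RHS]e; by apply: eq_bigr => i _; rewrite mxE.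
have hp : forall i : 'I_k, predT i -> 0 <= w r i * w r i.
  by move=> i _; rewrite -expr2 sqr_ge0.
have e := @psumr_eq0P _ _ predT (fun i => w r i * w r i) hp h0 j isT.
have : w r j * w r j == 0 by rewrite /= e.
by rewrite mulf_eq0 orbb => /eqP.
Qed.

Lemma gram_sub (F : realFieldType) k (B : 'M[F]_k) : (B <= B^T *m B)%MS.
Proof.
have sub1 : (B^T *m B <= B)%MS by apply: submxMl.
have hk : (kermx (B^T *m B) :=: kermx B^T)%MS.
  apply/eqmxP/andP; split; apply/sub_kermxP.
    apply/mx_sq_eq0; rewrite trmx_mul trmxK.
    have := (sub_kermxP (submx_refl (kermx (B^T *m B)))).
    by rewrite !mulmxA => ->; rewrite mul0mx.
  by rewrite mulmxA; have /sub_kermxP -> := submx_refl (kermx B^T); rewrite mul0mx.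
have hr : \rank (B^T *m B) = \rank B.
  have := mxrank_ker (B^T *m B); rewrite hk mxrank_ker mxrank_tr.
  have := rank_leq_row B; have := rank_leq_row (B^T *m B); lia.
have := mxrank_leqif_sup sub1; rewrite hr => /leqifP.
by case: ifP => //; rewrite ltnn.
Qed.

End M_Gram.
Import M_Gram.

Module M_Cl4.
Import GRing.Theory Num.Theory.
Local Open Scope ring_scope.

Set Implicit Arguments.
Unset Strict Implicit.
Unset Printing Implicit Defensive.

Section Coords.
Variables (F : realFieldType) (m : nat).
Local Notation cl := (cl F m).
Local Notation N := #|{set 'I_m}|.

Definition vec (u : cl) : 'rV[F]_N := \row_i u (enum_val i).
Definition unvec (r : 'rV[F]_N) : cl := [ffun S => r 0 (enum_rank S)].

Lemma unvecK r : vec (unvec r) = r.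
Proof. by apply/rowP => i; rewrite !mxE ffunE enum_valK. Qed.
Lemma vecK u : unvec (vec u) = u.
Proof. by apply/ffunP => S; rewrite ffunE mxE enum_rankK. Qed.

Definition Mat (a : cl) : 'M[F]_N :=
  \matrix_(i, j) clmul a (cbasis F (enum_val i)) (enum_val j).

Lemma vec_mul a c : vec (clmul a c) = vec c *m Mat a.
Proof.
apply/rowP => j; rewrite !mxE.
rewrite {1}(basis_expand c) clmul_sumr sum_ffunE.
rewrite (big_enum_val (A := predT)) /=.
apply: eq_bigr => i _; rewrite clmulZr clZ !mxE //.
Qed.

Lemma Mat_rev a : Mat (crev a) = (Mat a)^T.
Proof.
apply/matrixP => i j; rewrite !mxE.
by rewrite -!ip_basis ip_adjl ipC crevK.
Qed.

Lemma exists_y (W : cl) : exists y, clmul W (clmul (crev W) y) = W.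
Proof.
set B := Mat W.
have h1 : (vec W <= B)%MS.
  by rewrite -{1}(clmul1r W) vec_mul submxMl.
have /submxP [D hD] := submx_trans h1 (gram_sub B).
exists (unvec D).
rewrite -(vecK (clmul _ _)) vec_mul vec_mul Mat_rev unvecK -mulmxA -hD vecK //.
Qed.

End Coords.

End M_Cl4.
Import M_Cl4.

Module M_Main.
Import GRing.Theory Num.Theory.
Local Open Scope ring_scope.
Local Open Scope quotient_scope.

Set Implicit Arguments.
Unset Strict Implicit.
Unset Printing Implicit Defensive.

Section CA.
Variables (R : realType) (n : nat).
Local Notation A := (An R n).
Local Notation cA := (@cA R n).

Lemma cAM (a b : R) : cA (a * b) = cA a * cA b.
Proof. by rewrite /Defs.cA mpolyCM rmorphM. Qed.
Lemma cAD (a b : R) : cA (a + b) = cA a + cA b.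
Proof. by rewrite /Defs.cA mpolyCD rmorphD. Qed.
Lemma cA1 : cA 1 = 1.
Proof. by rewrite /Defs.cA rmorph1. Qed.
Lemma cA0 : cA 0 = 0.
Proof. by rewrite /Defs.cA raddf0. Qed.
Lemma cAN (a : R) : cA (- a) = - cA a.
Proof. by rewrite /Defs.cA mpolyCN raddfN. Qed.
Lemma cAX (a : R) k : cA (a ^+ k) = cA a ^+ k.
Proof. by elim: k => [|k IH]; rewrite ?expr0 ?cA1 // !exprS cAM IH. Qed.
Lemma cA_sum (I : Type) (r : seq I) (P : pred I) (F : I -> R) :
  cA (\sum_(i <- r | P i) F i) = \sum_(i <- r | P i) cA (F i).
Proof. exact: (big_morph _ cAD cA0). Qed.
Lemma cAn k : cA k%:R = k%:R.
Proof. by elim: k => [|k IH]; rewrite ?cA0 // -addn1 !natrD cAD IH cA1. Qed.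
Lemma cA_inv (a : R) : a != 0 -> cA a * cA a^-1 = 1.
Proof. by move=> h; rewrite -cAM mulfV // cA1. Qed.

Lemma sum_xA2 : \sum_(i < n.+1) @Defs.xA R n i * @Defs.xA R n i = 1 :> A.
Proof.
have h : (\sum_(i < n.+1) 'X_i ^+ 2 - 1) - 0 \in @sph_ideal R n.
  by rewrite subr0; apply/sph_idealP; exists 1; rewrite mul1r.
have e2 : \pi_A (\sum_(i < n.+1) 'X_i ^+ 2 - 1 : {mpoly R[n.+1]}) = 0 :> A.
  move: h; rewrite Quotient.idealrBE => /eqP ->; exact: rmorph0.
move: e2; rewrite rmorphB rmorph1 rmorph_sum => /eqP; rewrite subr_eq0 => /eqP e3.
apply: (etrans _ e3).
by apply: eq_bigr => i _; rewrite rmorphXn expr2.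
Qed.

End CA.

Section Main.
Variables (R : realType) (n : nat) (W : cl R n.+1).
Hypothesis WW : clmul W W = W.
Local Notation A := (An R n).
Local Notation m := n.+1.
Local Notation cA := (@cA R n).
Local Notation N := #|{set 'I_n.+1}|.

Definition liftC (u : cl R m) : cl A m := [ffun S => cA (u S)].

Lemma liftC_mul u v : liftC (clmul u v) = clmul (liftC u) (liftC v).
Proof.
apply/ffunP => U; rewrite ffunE !clmulE cA_sum; apply: eq_bigr => S _.
by rewrite !ffunE !cAM /csign cAX cAN cA1.
Qed.
Lemma liftC_rev u : liftC (crev u) = crev (liftC u).
Proof. by apply/ffunP => S; rewrite !ffunE cAM cAX cAN cA1. Qed.

Definition xx : cl A m := \sum_(i < m) @xA R n i *: cgen A i.
Definition c2 : A := cA (2^-1).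
Lemma c2_2 : c2 * 2 = 1.
Proof. by rewrite /c2 -(cAn R n 2) -cAM mulVf ?cA1 // pnatr_eq0. Qed.

Lemma xx2 : clmul xx xx = cl1 A m.
Proof.
set G := clmul xx xx.
have eG : G = \sum_(i < m) \sum_(j < m)
    (@xA R n i * @xA R n j) *: clmul (cgen A i) (cgen A j).
  rewrite /G /xx clmul_suml; apply: eq_bigr => i _.
  rewrite clmulZl clmul_sumr scaler_sumr; apply: eq_bigr => j _.
  by rewrite clmulZr scalerA.
have eG' : G = \sum_(i < m) \sum_(j < m)
    (@xA R n j * @xA R n i) *: clmul (cgen A j) (cgen A i).
  by rewrite eG exchange_big.
have e2 : G + G = 2 *: cl1 A m.
  rewrite {1}eG eG' -big_split /=.
  under eq_bigr => i _ do rewrite -big_split /=.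
  under eq_bigr => i _ do under eq_bigr => j _ do
    rewrite (mulrC (@xA R n j)) -scalerDr cgen_anti.
  rewrite (eq_bigr (fun i => (@xA R n i * @xA R n i) *: (2 *: cl1 A m))); last first.
    move=> i _; rewrite (bigD1 i) //= eqxx big1 ?addr0 // => j /negPf hj.
    by rewrite eq_sym hj scale0r scaler0.
  by rewrite -scaler_suml sum_xA2 scale1r.
have -> : G = (c2 * 2) *: G by rewrite c2_2 scale1r.
by rewrite -scalerA scaler_nat mulr2n e2 scalerA c2_2 scale1r.
Qed.

Definition Phi (u : cl A m) : cl A m := c2 *: (clmul xx u + u).
Definition hh : cl A m := c2 *: (cl1 A m - xx).
Definition Wl : cl A m := liftC W.
Definition Q (u : cl A m) : cl A m := clmul hh (clmul u Wl).
Definition Pn (u : cl A m) : Prop := clmul u Wl = u /\ Phi u = 0.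

Lemma c2_inj (z : cl A m) : c2 *: z = 0 -> z = 0.
Proof.
move=> h; rewrite -[z]scale1r -c2_2 mulrC -scalerA h scaler0 //.
Qed.

Lemma Phi0 u : Phi u = 0 <-> clmul xx u = - u.
Proof.
split; first by move=> /c2_inj /eqP; rewrite addr_eq0 => /eqP.
by move=> h; rewrite /Phi h addNr scaler0.
Qed.

Lemma xx_h : clmul xx hh = - hh.
Proof.
by rewrite /hh clmulZr clmulBr clmul1r xx2 -scalerN opprB.
Qed.

Lemma two_scale (u : cl A m) : u + u = 2 *: u.
Proof. by rewrite scaler_nat mulr2n. Qed.

Lemma h_fix u : clmul xx u = - u -> clmul hh u = u.
Proof.
move=> h; rewrite /hh clmulZl clmulBl clmul1l h opprK two_scale scalerA c2_2 scale1r //.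
Qed.

Lemma crev0 : crev (0 : cl A m) = 0.
Proof. by apply/ffunP => S; rewrite !ffunE mulr0. Qed.

Lemma crev_xx : crev xx = xx.
Proof.
rewrite /xx (big_morph _ (@crevD _ _) crev0); apply: eq_bigr => i _.
by rewrite crevZ crev_gen.
Qed.

Lemma crev_h : crev hh = hh.
Proof. by rewrite /hh crevZ crevB crev1 crev_xx. Qed.

Lemma Wl_idem : clmul Wl Wl = Wl.
Proof. by rewrite /Wl -liftC_mul WW. Qed.

Lemma Pn_xx u : Pn u -> clmul xx u = - u.
Proof. by move=> [_ /Phi0]. Qed.

Lemma Q_in u : Pn (Q u).
Proof.
split; first by rewrite /Q !clmulA Wl_idem.
by apply/Phi0; rewrite /Q -clmulA xx_h clmulNl.
Qed.

Lemma Q_fix u : Pn u -> Q u = u.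
Proof. by move=> hu; rewrite /Q hu.1 h_fix // Pn_xx. Qed.

Lemma Q_lin (k : A) u v : Q (k *: u + v) = k *: Q u + Q v.
Proof. by rewrite /Q clmulDl clmulZl clmulDr clmulZr. Qed.

Lemma Pn_sub : submodule Pn.
Proof.
split.
  split; first by rewrite clmul0l.
  by rewrite /Phi clmul0r addr0 scaler0.
move=> a u v hu hv; split.
  by rewrite clmulDl clmulZl hu.1 hv.1.
apply/Phi0; rewrite clmulDr clmulZr !Pn_xx // scalerN opprD //.
Qed.

Definition bhat (u v : cl A m) : A :=
    \sum_(S : {set 'I_n.+1}) \sum_(T : {set 'I_n.+1})
       u S * v T * cA (cbeta (cbasis R S) (cbasis R T)).

Lemma bhat_ip u v : bhat u v = cA N%:R * ip u v.
Proof.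
rewrite /bhat /ip mulr_sumr; apply: eq_bigr => S _.
rewrite (bigD1 S) //= big1 ?addr0.
  by rewrite cbeta_basis eqxx mulrC.
by move=> T /negPf hT; rewrite cbeta_basis eq_sym hT cA0 mulr0.
Qed.

Lemma ipZl (k : A) (u v : cl A m) : ip (k *: u) v = k * ip u v.
Proof. by rewrite /ip mulr_sumr; apply: eq_bigr => S _; rewrite clZ mulrA. Qed.

Lemma cN : cA N%:R * cA (N%:R^-1) = 1.
Proof. by apply: cA_inv; rewrite pnatr_eq0 -lt0n; apply/card_gt0P; exists set0. Qed.

Definition uv (w : 'rV[A]_N) : cl A m := [ffun S => w 0 (enum_rank S)].
Definition gv (u : cl A m) : 'rV[A]_N := \row_i u (enum_val i).

Lemma main_fg : fg_projective Pn.
Proof.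
split; first exact: Pn_sub.
exists N, (fun w => Q (uv w)), gv; split.
- move=> a u v _ _; rewrite -Q_lin; congr Q.
  by apply/ffunP => S; rewrite !ffunE !mxE.
- move=> a u v _ _; apply/rowP => i; rewrite !mxE clD clZ //.
- by move=> w; apply: Q_in.
- move=> u hu; rewrite -{2}(Q_fix hu); congr Q.
  by apply/ffunP => S; rewrite ffunE mxE enum_rankK.
Qed.

Lemma phi_lin_sum (phi : cl A m -> A^o) : linear_on Pn phi ->
  forall (F : {set 'I_m} -> cl A m) (k : {set 'I_m} -> A), (forall S, Pn (F S)) ->
  phi (\sum_S k S *: F S) = \sum_S k S * phi (F S).
Proof.
move=> hphi F k hF.
have hP0 : Pn 0 := Pn_sub.1.
have phi0 : phi 0 = 0.
  have := hphi 1 0 0 hP0 hP0; rewrite scaler0 addr0 scale1r => e.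
  have : phi 0 + phi 0 = phi 0 + 0 by rewrite addr0 -e.
  by move/addrI.
pose K' := fun x y => Pn x /\ phi x = y.
have : K' (\sum_S k S *: F S) (\sum_S k S * phi (F S)).
  apply: (big_rec2 K'); first by split.
  move=> S x y _ [hx <-]; split; first exact: (Pn_sub.2 (k S) (F S) x (hF S) hx).
  by rewrite (hphi (k S) (F S) x (hF S) hx).
by case.
Qed.

End Main.


End M_Main.
Import M_Main.

Module M_Main2.
Import GRing.Theory Num.Theory.
Local Open Scope ring_scope.

Set Implicit Arguments.
Unset Strict Implicit.
Unset Printing Implicit Defensive.

Section ND.
Variables (R : realType) (n : nat) (W : cl R n.+1).
Hypothesis WW : clmul W W = W.
Local Notation A := (An R n).
Local Notation m := n.+1.
Local Notation N := #|{set 'I_n.+1}|.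
Local Notation Pn := (Pn W).
Local Notation Q := (Q W).
Local Notation Wl := (Wl W).
Local Notation hh := (hh R n).

Lemma main_nd : nondegenerate_on Pn (@bhat R n).
Proof.
have [y hy] := exists_y W.
set yl := liftC y.
have hWl : Wl = clmul Wl (clmul (crev Wl) yl).
  by rewrite /Wl /yl -liftC_rev -!liftC_mul hy.
have adj' : forall a u z : cl A m, ip u (clmul a z) = ip (clmul (crev a) u) z.
  by move=> a u' z; rewrite ip_adjl crevK.
have ipQ : forall u c, Pn u -> ip u (Q c) = ip c (clmul u (crev Wl)).
  move=> u c hu; rewrite /M_Main.Q.
  by rewrite adj' crev_h (h_fix (Pn_xx hu)) ipC ip_adjr.
split.
- move=> u hu H.
  have h0 : clmul u (crev Wl) = 0.
    apply/ffunP => S; rewrite cl0 -ip_basis ipC -ipQ //.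
    have := H _ (Q_in WW (cbasis A S)); rewrite bhat_ip => e.
    have := congr1 (fun t => cA n (N%:R^-1) * t) e.
    by rewrite mulr0 mulrA (mulrC _ (cA n N%:R)) cN mul1r.
  rewrite -(proj1 hu) hWl -clmulA (proj1 hu) -clmulA h0 clmul0l //.
- move=> phi hphi.
  pose psi c := phi (Q (clmul c yl)).
  pose g : cl A m := [ffun S => psi (cbasis A S)].
  have hpsi : forall c, psi c = ip c g.
    move=> c; rewrite /psi /M_Main.Q clmul_expand3.
    rewrite (phi_lin_sum hphi); last by move=> S; apply: (Q_in WW).
    by rewrite /ip; apply: eq_bigr => S _; rewrite ffunE.
  exists (cA n (N%:R^-1) *: Q g).
    by have := (Pn_sub W).2 (cA n (N%:R^-1)) _ _ (Q_in WW g) (Pn_sub W).1; rewrite addr0.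
  move=> v hv.
  have ev : clmul (clmul v (crev Wl)) yl = v.
    by rewrite clmulA -{1}(proj1 hv) clmulA -hWl (proj1 hv).
  have e1 : phi v = psi (clmul v (crev Wl)) by rewrite /psi ev Q_fix.
  rewrite bhat_ip ipZl mulrA cN mul1r e1 hpsi.
  by rewrite /M_Main.Q ip_adjl crev_h (h_fix (Pn_xx hv)) ip_adjr ipC.
Qed.

End ND.

End M_Main2.
Import M_Main2.

Import GRing.Theory.
Local Open Scope ring_scope.
Theorem mainTheorem3 (R : realType) (n : nat) (hn : (1 <= n)%N)
    (wp : cl R n.+1) (hwp : primitive_idempotent wp) :
  let A := An R n in
  (* R-coefficients viewed in A_n: C^{0,n+1} -> A_n (x) C^{0,n+1}, u |-> 1 (x) u *)
  let liftC (u : cl R n.+1) : cl A n.+1 := [ffun S => @cA R n (u S)] in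
  (* A_n (x)_R E  with  E = C^{0,n+1} wp,  inside  A_n (x)_R C^{0,n+1} *)
  let AE (u : cl A n.+1) : Prop := clmul u (liftC wp) = u in
  (* bold x = sum_i x_i (x) e_i *)
  let xx : cl A n.+1 := \sum_(i < n.+1) @xA R n i *: cgen A i in
  (* Phi = left multiplication by (x + 1)/2 *)
  let Phi (u : cl A n.+1) : cl A n.+1 := @cA R n (2^-1) *: (clmul xx u + u) in
  (* P_n = ker (Phi : A_n (x) E -> A_n (x) E) *)
  let Pn (u : cl A n.+1) : Prop := AE u /\ Phi u = 0 in
  (* beta-hat(a (x) x, b (x) y) = a b beta(x, y), extended A_n-bilinearly *)
  let bhat (u v : cl A n.+1) : A :=
    \sum_(S : {set 'I_n.+1}) \sum_(T : {set 'I_n.+1})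
       u S * v T * @cA R n (cbeta (cbasis R S) (cbasis R T)) in
  fg_projective Pn /\ nondegenerate_on Pn bhat.
Proof.
move=> A liftC' AE xx' Phi' Pn' bhat'.
have WW : clmul wp wp = wp by case: hwp.
split; [exact: (main_fg WW) | exact: (main_nd WW)].
Qed.
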